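(* There is an absolute constant $c_0>0$ such that the following holds for every $0<\beta<1$. Let $t$ be a $\beta$-balanced full binary tree with $n\ge2$ leaves whose nodes carry at most $\sigma\ge2$ different labels. Then the minimal dag of $t$ has at most $\frac{\alpha_\beta\cdot n}{\log_\sigma n}$ nodes, where $\alpha_\beta = c_0\big(1+\log_{1+\beta}(\beta^{-1})\big)$ depends only on $\beta$.
   Context: A full binary tree is a finite rooted ordered labelled tree in which every node has either $0$ or $2$ children. The leaf size of a node is the number of leaves of the subtree rooted at it. An inner node $v$ with children $v_1,v_2$ of leaf sizes $n_1,n_2$ is $\beta$-balanced if $n_1\ge\beta n_2$ and $n_2\ge\beta n_1$. The tree $t$ is $\beta$-balanced if for all inner nodes $u,v$ such that $v$ is a child of $u$, at least one of $u$, $v$ is $\beta$-balanced. The minimal dag of a tree has one node for each isomorphism class (as labelled ordered trees) of subtrees of the tree; its size is its number of nodes. *)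

(* Defs.v *)
From Stdlib Require Import Reals List Arith.
Import ListNotations.
Open Scope R_scope.

Inductive tree (A : Type) : Type :=
| Leaf : A -> tree A
| Node : A -> tree A -> tree A -> tree A.
Arguments Leaf {A} _.
Arguments Node {A} _ _ _.

Section Trees.
Context {A : Type} (eqA : forall x y : A, {x = y} + {x <> y}).

Definition tree_eq_dec : forall s t : tree A, {s = t} + {s <> t}.
Proof. decide equality. Defined.

Fixpoint leaves (t : tree A) : nat :=
  match t with Leaf _ => 1%nat | Node _ l r => (leaves l + leaves r)%nat end.

Fixpoint labels (t : tree A) : list A :=
  match t with Leaf a => [a] | Node a l r => a :: labels l ++ labels r end.

Fixpoint subtrees (t : tree A) : list (tree A) :=
  match t with
  | Leaf _ => [t]
  | Node _ l r => t :: subtrees l ++ subtrees r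
  end.

Definition num_labels (t : tree A) : nat := length (nodup eqA (labels t)).

(* size of the minimal dag = number of isomorphism classes (= equality classes
   as labelled ordered trees) of subtrees *)
End Trees.
Definition dag_size {A} (eqA : forall x y : A, {x = y} + {x <> y}) (t : tree A) : nat :=
  length (nodup (tree_eq_dec eqA) (subtrees t)).

Definition is_inner {A} (t : tree A) : Prop :=
  match t with Leaf _ => False | Node _ _ _ => True end.

Definition node_balanced {A} (beta : R) (t : tree A) : Prop :=
  match t with
  | Leaf _ => False
  | Node _ l r =>
      INR (leaves l) >= beta * INR (leaves r) /\ INR (leaves r) >= beta * INR (leaves l)
  end.

Fixpoint tree_balanced {A} (beta : R) (t : tree A) : Prop :=
  match t with
  | Leaf _ => True
  | Node _ l r =>
      tree_balanced beta l /\ tree_balanced beta r /\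
      (forall c, (c = l \/ c = r) -> is_inner c ->
          node_balanced beta t \/ node_balanced beta c)
  end.

Definition logb (b x : R) : R := ln x / ln b.

(* Main.v *)
Require Import Defs.
From Stdlib Require Import Reals List Arith Lia Lra FinFun ZArith.
Import ListNotations.
Open Scope R_scope.

Section Comb.
Context {A : Type} (eqA : forall x y : A, {x = y} + {x <> y}).

Fixpoint enc (t : tree A) : list (bool * A) :=
  match t with
  | Leaf a => [(false, a)]
  | Node a l r => (true, a) :: enc l ++ enc r
  end.

Lemma enc_app_inj : forall t1 t2 w1 w2, enc t1 ++ w1 = enc t2 ++ w2 -> t1 = t2 /\ w1 = w2.
Proof.
  induction t1 as [a|a l IHl r IHr]; intros [b|b l2 r2] w1 w2 H; simpl in H;
    inversion H; subst; auto.
  rewrite <- !app_assoc in H2.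
  destruct (IHl _ _ _ H2) as [-> H3].
  destruct (IHr _ _ _ H3) as [-> ->]. auto.
Qed.

Lemma enc_inj : Injective enc.
Proof. intros t1 t2 H. apply (enc_app_inj t1 t2 [] []). rewrite !app_nil_r; auto. Qed.

Lemma enc_length : forall (t : tree A), (length (enc t) + 1 = 2 * leaves t)%nat.
Proof. induction t; simpl; rewrite ?length_app; lia. Qed.

Lemma enc_labels : forall t x, In x (enc t) -> In (snd x) (labels t).
Proof.
  induction t as [a|a l IHl r IHr]; simpl; intros x H.
  - destruct H as [<-|[]]; simpl; auto.
  - destruct H as [<-|H]; simpl; auto. right. apply in_app_or in H.
    apply in_or_app. destruct H; auto.
Qed.

Lemma subtrees_labels : forall (t u : tree A), In u (subtrees t) -> incl (labels u) (labels t).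
Proof.
  induction t as [a|a l IHl r IHr]; simpl; intros u H.
  - destruct H as [<-|[]]; apply incl_refl.
  - destruct H as [<-|H]; [apply incl_refl|].
    apply in_app_or in H. intros y Hy. right. apply in_or_app.
    destruct H; [left; apply (IHl u)|right; apply (IHr u)]; auto.
Qed.

Lemma subtrees_length : forall (t : tree A), (length (subtrees t) + 1 = 2 * leaves t)%nat.
Proof. induction t; simpl; rewrite ?length_app; lia. Qed.

Variable Sig : list (bool * A).
Fixpoint words (N : nat) : list (list (bool * A)) :=
  match N with
  | O => [[]]
  | S N => [] :: flat_map (fun a => map (cons a) (words N)) Sig
  end.

Lemma flat_map_len : forall N, length (flat_map (fun a => map (cons a) (words N)) Sig)
   = (length Sig * length (words N))%nat.
Proof.
  intros N. induction Sig as [|a s IH]; simpl; auto. rewrite length_app, length_map, IH. lia.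
Qed.

Lemma words_length : forall N, (length (words N) <= (length Sig + 1) ^ N)%nat.
Proof.
  induction N; simpl; auto.
  rewrite flat_map_len.
  assert (1 <= (length Sig + 1) ^ N)%nat by (apply Nat.pow_le_mono_r with (a:=1%nat) in IHN; 
     [ | lia]; clear IHN; induction N; simpl; lia).
  nia.
Qed.

Lemma words_in : forall N w, (length w <= N)%nat -> incl w Sig -> In w (words N).
Proof.
  induction N; intros [|a w] Hl Hi; simpl in *; auto; try lia.
  right. apply in_flat_map. exists a. split; [apply Hi; simpl; auto|].
  apply in_map. apply IHN; [lia|]. intros y Hy; apply Hi; simpl; auto.
Qed.
End Comb.

Section C2.
Context {A : Type} (eqA : forall x y : A, {x = y} + {x <> y}).

Definition Sig (t : tree A) := flat_map (fun a => [(true,a);(false,a)]) (nodup eqA (labels t)).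

Lemma Sig_len : forall l : list A, length (flat_map (fun a => [(true,a);(false,a)]) l) = (2 * length l)%nat.
Proof. induction l; simpl; auto; lia. Qed.

Lemma small_count : forall (t : tree A) k,
  (length (nodup (tree_eq_dec eqA) (filter (fun u => leaves u <=? k) (subtrees t)))
    <= (2 * num_labels eqA t + 1) ^ (2 * k))%nat.
Proof.
  intros t k.
  rewrite <- (length_map enc).
  eapply Nat.le_trans.
  - apply NoDup_incl_length with (l' := words (Sig t) (2 * k)).
    + apply Injective_map_NoDup; [apply enc_inj | apply NoDup_nodup].
    + intros w Hw. apply in_map_iff in Hw. destruct Hw as [u [<- Hu]].
      apply nodup_In, filter_In in Hu. destruct Hu as [Hu Hk].
      apply Nat.leb_le in Hk.
      apply words_in.
      * pose proof (enc_length u). lia.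
      * intros x Hx. pose proof (enc_labels u x Hx) as Hl.
        apply (subtrees_labels t u Hu) in Hl.
        destruct x as [b a]. unfold Sig. apply in_flat_map. exists a.
        split; [apply nodup_In; auto|]. destruct b; simpl; auto.
  - eapply Nat.le_trans; [apply words_length|]. unfold Sig. rewrite Sig_len.
    unfold num_labels. apply Nat.le_refl.
Qed.

Lemma split_count : forall (l : list (tree A)) (p : tree A -> bool),
  (length (nodup (tree_eq_dec eqA) l) <=
   length (nodup (tree_eq_dec eqA) (filter p l)) + length (filter (fun u => negb (p u)) l))%nat.
Proof.
  intros l p. rewrite <- length_app. apply NoDup_incl_length; [apply NoDup_nodup|].
  intros x Hx. apply nodup_In in Hx. apply in_or_app.
  destruct (p x) eqn:E; [left; apply nodup_In, filter_In; auto
                         | right; apply filter_In; rewrite E; auto].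
Qed.

Definition bigc (k : nat) (t : tree A) : nat :=
  length (filter (fun u => negb (leaves u <=? k)) (subtrees t)).

Lemma bigc_node : forall k a l r, bigc k (Node a l r) =
  ((if leaves (Node a l r) <=? k then 0 else 1) + bigc k l + bigc k r)%nat.
Proof.
  intros. unfold bigc. simpl subtrees. cbn [filter].
  destruct (leaves (Node a l r) <=? k); simpl; rewrite filter_app, length_app; lia.
Qed.

Lemma leaves_pos : forall t : tree A, (1 <= leaves t)%nat.
Proof. induction t; simpl; lia. Qed.

Lemma bigc_small : forall k (t : tree A), (leaves t <= k)%nat -> bigc k t = 0%nat.
Proof.
  intros k t. induction t as [a|a l IHl r IHr]; intros H.
  - unfold bigc. simpl. apply Nat.leb_le in H. simpl in H. rewrite H. auto.
  - rewrite bigc_node, IHl, IHr by (simpl in H; lia).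
    destruct (Nat.leb_spec0 (leaves (Node a l r)) k); [reflexivity | simpl in *; lia].
Qed.
End C2.

Section C3.
Context {A : Type}.
Variables (beta : R) (k : nat).
Hypothesis Hb : 0 < beta < 1.
Hypothesis Hk : (1 <= k)%nat.

Let P := beta * INR k.

Lemma inner_of_big : forall t : tree A, (k < leaves t)%nat -> is_inner t.
Proof. intros [a|a l r] H; simpl in *; auto; lia. Qed.

Lemma big_inv : forall t : tree A, tree_balanced beta t -> (k < leaves t)%nat ->
  P * INR (bigc k t) + 2 * P <= 4 * INR (leaves t) /\
  (node_balanced beta t -> P * INR (bigc k t) + 3 * P <= 4 * INR (leaves t)).
Proof.
  assert (HK : 1 <= INR k) by (apply (le_INR 1); auto).
  assert (HP : 0 < P) by (unfold P; nra).
  assert (HP1 : P <= INR k) by (unfold P; nra).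
  induction t as [a|a l IHl r IHr]; intros Hbal Hlt.
  - simpl in Hlt. lia.
  - destruct Hbal as [Hbl [Hbr Hc]].
    rewrite bigc_node.
    assert (E : (leaves (Node a l r) <=? k) = false) by (apply Nat.leb_gt; auto).
    rewrite E. simpl leaves in *. rewrite !plus_INR. simpl (INR 1).
    destruct (Nat.lt_ge_cases k (leaves l)) as [Hl|Hl];
    destruct (Nat.lt_ge_cases k (leaves r)) as [Hr|Hr].
    + destruct (IHl Hbl Hl) as [Wl _]. destruct (IHr Hbr Hr) as [Wr _].
      split; [|intros _]; nra.
    + rewrite (bigc_small k r Hr). simpl (INR 0).
      destruct (IHl Hbl Hl) as [Wl Sl].
      assert (Lr1 : 1 <= INR (leaves r)) by (apply (le_INR 1), leaves_pos).
      assert (Kl : INR k < INR (leaves l)) by (apply lt_INR; auto).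
      assert (Sgoal : node_balanced beta (Node a l r) ->
         P * (1 + INR (bigc k l) + 0) + 3 * P <= 4 * (INR (leaves l) + INR (leaves r))).
      { intros [H1 H2]. assert (beta * INR k <= beta * INR (leaves l)) by nra.
        unfold P in *. nra. }
      split; auto.
      destruct (Hc l (or_introl eq_refl) (inner_of_big l Hl)) as [Hn|Hn].
      * specialize (Sgoal Hn). nra.
      * specialize (Sl Hn). nra.
    + rewrite (bigc_small k l Hl). simpl (INR 0).
      destruct (IHr Hbr Hr) as [Wr Sr].
      assert (Lr1 : 1 <= INR (leaves l)) by (apply (le_INR 1), leaves_pos).
      assert (Kl : INR k < INR (leaves r)) by (apply lt_INR; auto).
      assert (Sgoal : node_balanced beta (Node a l r) ->
         P * (1 + 0 + INR (bigc k r)) + 3 * P <= 4 * (INR (leaves l) + INR (leaves r))).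
      { intros [H1 H2]. assert (beta * INR k <= beta * INR (leaves r)) by nra.
        unfold P in *. nra. }
      split; auto.
      destruct (Hc r (or_intror eq_refl) (inner_of_big r Hr)) as [Hn|Hn].
      * specialize (Sgoal Hn). nra.
      * specialize (Sr Hn). nra.
    + rewrite (bigc_small k l Hl), (bigc_small k r Hr). simpl (INR 0).
      assert (Kl : INR k < INR (leaves l) + INR (leaves r)) by (rewrite <- plus_INR; apply lt_INR; auto).
      split; [|intros _]; nra.
Qed.

Lemma big_bound : forall t : tree A, tree_balanced beta t ->
  P * INR (bigc k t) <= 4 * INR (leaves t).
Proof.
  intros t H.
  assert (HP : 0 < P) by (unfold P; assert (1 <= INR k) by (apply (le_INR 1); auto); nra).
  destruct (Nat.lt_ge_cases k (leaves t)) as [Hl|Hl].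
  - destruct (big_inv t H Hl). lra.
  - rewrite (bigc_small k t Hl). simpl. pose proof (pos_INR (leaves t)). lra.
Qed.
End C3.

Lemma exp_ge : forall u, 1 + u <= exp u.
Proof.
  intros u. destruct (Req_dec u 0) as [->|H].
  - rewrite exp_0. lra.
  - left. apply exp_ineq1; auto.
Qed.

Lemma exp_le : forall u v, u <= v -> exp u <= exp v.
Proof. intros u v [H| ->]; [left; apply exp_increasing; auto | lra]. Qed.

Lemma ln_le' : forall u v, 0 < u -> u <= v -> ln u <= ln v.
Proof. intros u v H [H1| ->]; [left; apply ln_increasing; auto | lra]. Qed.

Lemma nat_floor : forall N y, 0 <= y < INR N -> exists k, INR k <= y < INR k + 1.
Proof.
  induction N; intros y Hy; [simpl in Hy; lra|].
  rewrite S_INR in Hy.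
  destruct (Rlt_or_le y (INR N)) as [H|H].
  - apply IHN; lra.
  - exists N; lra.
Qed.

Lemma A_beta : forall beta, 0 < beta < 1 -> / beta <= 1 + logb (1 + beta) (/ beta).
Proof.
  intros b Hb. unfold logb.
  set (u := ln (/ b)). set (v := ln (1 + b)).
  assert (Hu : 1 - b <= u).
  { unfold u. rewrite ln_Rinv by lra. pose proof (exp_ge (ln b)). rewrite exp_ln in H by lra. lra. }
  assert (Hv : v <= b).
  { unfold v. pose proof (exp_ge b). apply ln_le' in H; [|lra]. rewrite ln_exp in H. auto. }
  assert (Hv0 : 0 < v).
  { unfold v. rewrite <- ln_1. apply ln_increasing; lra. }
  set (w := u / v).
  assert (Hw : u = w * v) by (unfold w; field; lra).
  assert (Hw0 : 0 <= w) by (unfold w; apply Rmult_le_pos; [lra| left; apply Rinv_0_lt_compat; auto]).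
  assert (Hib : / b * b = 1) by (field; lra).
  assert (Hib0 : 0 < / b) by (apply Rinv_0_lt_compat; lra).
  assert (w * b >= 1 - b) by nra.
  nra.
Qed.

Theorem mainTheorem6 :
  exists c0 : R, c0 > 0 /\
  forall beta : R, 0 < beta < 1 ->
  forall (A : Type) (eqA : forall x y : A, {x = y} + {x <> y})
         (t : tree A) (sigma : nat),
    tree_balanced beta t ->
    (2 <= leaves t)%nat ->
    (2 <= sigma)%nat ->
    (num_labels eqA t <= sigma)%nat ->
    INR (dag_size eqA t) <=
      c0 * (1 + logb (1 + beta) (/ beta)) * INR (leaves t)
        / logb (INR sigma) (INR (leaves t)).
Proof.
  exists 200. split; [lra|].
  intros b Hb A eqA t sigma Hbal Hn Hs Hlab.
  set (n := INR (leaves t)). set (sr := INR sigma).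
  assert (Hn2 : 2 <= n) by (apply (le_INR 2); auto).
  assert (Hs2 : 2 <= sr) by (apply (le_INR 2); auto).
  set (L := ln n). set (l := ln sr).
  assert (HL : 0 < L) by (unfold L; rewrite <- ln_1; apply ln_increasing; lra).
  assert (Hl : / 2 < l) by (unfold l; pose proof ln_lt_2; pose proof (ln_le' 2 sr ltac:(lra) Hs2); lra).
  assert (Hexp : exp L = n) by (apply exp_ln; lra).
  pose proof (A_beta b Hb) as HA. set (Ab := 1 + logb (1 + b) (/ b)) in *.
  unfold logb. fold L l.
  set (x := L / l).
  assert (Hxl : x * l = L) by (unfold x; field; lra).
  assert (Hx0 : 0 < x) by (unfold x; apply Rdiv_lt_0_compat; lra).
  set (dg := INR (dag_size eqA t)).
  assert (Hdg0 : 0 <= dg) by apply pos_INR.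
  assert (Hib : / b * b = 1) by (field; lra).
  assert (Hib0 : 0 < / b) by (apply Rinv_0_lt_compat; lra).
  enough (Key : dg * x * b <= 200 * n).
  { assert (Hix : / x * x = 1) by (field; lra).
    assert (Hix0 : 0 < / x) by (apply Rinv_0_lt_compat; lra).
    unfold Rdiv.
    assert (dg <= 200 * / b * n * / x).
    { assert (dg = dg * x * b * (/ b * / x)) by (field; lra).
      rewrite H. assert (0 < / b * / x) by nra.
      replace (200 * / b * n * / x) with (200 * n * (/ b * / x)) by ring.
      apply Rmult_le_compat_r; lra. }
    assert (0 < n * / x) by nra.
    assert (0 <= (Ab - / b) * (n * / x)) by (apply Rmult_le_pos; lra).
    nra. }
  assert (Htriv : dg <= 2 * n).
  { unfold dg, n, dag_size.
    assert (length (nodup (tree_eq_dec eqA) (subtrees t)) <= length (subtrees t))%nat.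
    { apply NoDup_incl_length; [apply NoDup_nodup|]. intros y Hy; apply nodup_In in Hy; auto. }
    pose proof (subtrees_length t).
    assert (length (nodup (tree_eq_dec eqA) (subtrees t)) <= 2 * leaves t)%nat by lia.
    apply le_INR in H1. rewrite mult_INR in H1. simpl (INR 2) in H1. lra. }
  destruct (Rle_or_lt x 24) as [Hx|Hx].
  { assert (dg * x * b <= dg * x) by (assert (0 <= dg * x) by nra; nra).
    assert (dg * x <= 2 * n * 24) by nra. lra. }
  destruct (nat_floor (S (Z.to_nat (up x))) (x / 12)) as [k [Hk1 Hk2]].
  { split; [lra|]. rewrite S_INR, INR_IZR_INZ, Z2Nat.id.
    - pose proof (archimed x). lra.
    - pose proof (archimed x). apply le_IZR. simpl. lra. }
  assert (HK1 : 1 <= INR k) by lra.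
  assert (Hk : (1 <= k)%nat) by (destruct k; [simpl in HK1; lra | lia]).
  pose proof (split_count eqA (subtrees t) (fun u => leaves u <=? k)) as Hsp.
  fold (bigc k t) in Hsp.
  pose proof (small_count eqA t k) as Hsm.
  set (D := length (nodup (tree_eq_dec eqA) (filter (fun u => leaves u <=? k) (subtrees t)))) in *.
  assert (HD : (D <= (2 * sigma + 1) ^ (2 * k))%nat).
  { eapply Nat.le_trans; [apply Hsm|]. apply Nat.pow_le_mono_l. lia. }
  apply le_INR in HD. rewrite pow_INR, plus_INR, mult_INR in HD. simpl (INR 2) in HD.
  simpl (INR 1) in HD. fold sr in HD.
  assert (HD2 : INR D <= exp (L / 2)).
  { eapply Rle_trans; [apply HD|].
    eapply Rle_trans.
    { apply pow_incr with (y := sr ^ 3). split; [lra|]. simpl. nra. }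
    rewrite <- pow_mult, <- Rpower_pow by lra. unfold Rpower. apply exp_le.
    fold l. rewrite mult_INR, mult_INR. simpl (INR 3). simpl (INR 2).
    assert (0 < l) by lra. rewrite <- Hxl. nra. }
  assert (HB := big_bound b k Hb Hk t Hbal). fold n in HB.
  set (Bg := INR (bigc k t)) in *.
  assert (HBg0 : 0 <= Bg) by apply pos_INR.
  assert (Hdg : dg <= INR D + Bg).
  { unfold dg, Bg, dag_size. rewrite <- plus_INR. apply le_INR. auto. }
  assert (HD3 : INR D * x <= 4 * n).
  { assert (x <= 2 * L) by nra.
    pose proof (exp_ge (L / 2)).
    assert (exp L = exp (L/2) * exp (L/2)) by (rewrite <- exp_plus; f_equal; field).
    assert (0 < exp (L/2)) by apply exp_pos.
    assert (0 <= INR D) by apply pos_INR.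
    nra. }
  assert (HB2 : Bg * b * x <= 96 * n).
  { assert (x <= 24 * INR k) by lra.
    assert (0 <= Bg * b) by nra.
    assert (Bg * b * x <= Bg * b * (24 * INR k)) by (apply Rmult_le_compat_l; lra).
    lra. }
  assert (0 <= INR D) by apply pos_INR.
  assert (dg * x * b <= (INR D + Bg) * x * b).
  { apply Rmult_le_compat_r; [lra|]. apply Rmult_le_compat_r; lra. }
  assert (INR D * x * b <= INR D * x) by (assert (0 <= INR D * x) by nra; nra).
  lra.
Qed.
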